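(* Let $m,n\in\mathbb{N}$ and $f:\mathbb{Z}_n\to\mathbb{C}$. Suppose $\Gamma\subseteq\mathbb{Z}_n$ satisfies $\|f-f|_\Gamma\|_2^2\le\epsilon$ for some $\epsilon>0$. Let $\ell:=\min(n,m)$ and let $g:\mathbb{Z}_m\to\mathbb{C}$ be defined by $g(x)=f(x)$ for $0\le x<\ell$ and $g(x)=0$ otherwise. Let $\epsilon'>0$, let $r=|\Gamma|\,\|f\|_2^2/(2\epsilon')$ and $\Gamma'=\bigcup_{\alpha\in\Gamma}\{\beta\in\mathbb{Z}_m:|\frac mn\alpha-\beta|_m\le r+1\}$. Then, with $t=n/m$, \[\|g-g|_{\Gamma'}\|_2^2\le t\epsilon+\epsilon'+2\sqrt{t\epsilon\epsilon'}.\]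
   Context: $\mathbb{Z}_n=\{0,\dots,n-1\}$ with addition mod $n$; elements are treated as these integer representatives. For $h:\mathbb{Z}_n\to\mathbb{C}$: $\langle h_1,h_2\rangle=\frac1n\sum_x h_1(x)\overline{h_2(x)}$, $\|h\|_2^2=\langle h,h\rangle$, $\chi_\alpha(x)=\exp(2\pi i\alpha x/n)$, $\widehat h(\alpha)=\langle h,\chi_\alpha\rangle$, and for $\Gamma\subseteq\mathbb{Z}_n$, $h|_\Gamma=\sum_{\alpha\in\Gamma}\widehat h(\alpha)\chi_\alpha$; analogously on $\mathbb{Z}_m$ with $m$ in place of $n$. For $k\in\mathbb{N}$, $x\in\mathbb{R}$: $|x|_k=\min\{|x-kz|:z\in\mathbb{Z}\}$. *)

(* Defs.v *)
From HB Require Import structures.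
From mathcomp Require Import all_boot all_order all_algebra.
From mathcomp Require Import all_classical all_reals.
From mathcomp Require Import trigo.
From mathcomp Require Import complex.
Set Implicit Arguments. Unset Strict Implicit. Unset Printing Implicit Defensive.
Import Order.TTheory GRing.Theory Num.Theory.
Local Open Scope ring_scope.
Local Open Scope classical_set_scope.

Section Fourier.
Variable R : realType.
Local Notation C := R[i].

(* Z_n is represented by 'I_n = {0,...,n-1} (integer representatives). *)

Definition ipZ (n : nat) (h1 h2 : 'I_n -> C) : C :=
  (n%:R)^-1 * \sum_(x : 'I_n) h1 x * conjc (h2 x).

(* ||h||_2^2 = <h,h> (a real number; we take its real part, the imaginary
   part being 0). *)
Definition norm2sq (n : nat) (h : 'I_n -> C) : R := complex.Re (ipZ h h).

Definition chi (n : nat) (alpha : 'I_n) (x : 'I_n) : C :=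
  let t : R := (2 * pi * (val alpha)%:R * (val x)%:R) / (n%:R) in
  (cos t +i* sin t)%C.

Definition fhat (n : nat) (h : 'I_n -> C) (alpha : 'I_n) : C :=
  ipZ h (chi alpha).

Definition restrF (n : nat) (h : 'I_n -> C) (G : {set 'I_n}) : 'I_n -> C :=
  fun x => \sum_(alpha in G) fhat h alpha * chi alpha x.

Definition distmod (k : nat) (x : R) : R :=
  inf [set `|x - (k%:R) * (z%:~R)| | z in [set: int]].

Definition extend (n m : nat) (f : 'I_n -> C) : 'I_m -> C :=
  fun x => if (val x < minn n m)%N then
             match @insub nat (fun k => k < n)%N _ (val x) with
             | Some y => f y
             | None => 0
             end
           else 0.

Definition Gamma' (n m : nat) (G : {set 'I_n}) (r : R) : {set 'I_m} :=
  [set beta : 'I_m | [exists alpha in G,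
     distmod m ((m%:R / n%:R) * (val alpha)%:R - (val beta)%:R) <= r + 1]].

End Fourier.

(* Main.v *)
Require Import Defs.
From HB Require Import structures.
From mathcomp Require Import all_boot all_order all_algebra.
From mathcomp Require Import all_classical all_reals.
From mathcomp Require Import complex.
From mathcomp Require Import topology normedtype derive trigo.
From mathcomp Require Import ring lra zify.
Import Order.TTheory GRing.Theory Num.Theory.
Import numFieldNormedType.Exports.
Local Open Scope ring_scope.


Section S.
Variable R : realType.
Local Notation C := R[i].

Definition nsq (z : C) : R := complex.Re z ^+ 2 + complex.Im z ^+ 2.
Definition cis (t : R) : C := (cos t +i* sin t)%C.

Lemma nsq_ge0 z : 0 <= nsq z.
Proof. by rewrite /nsq addr_ge0 // sqr_ge0. Qed.

Lemma mulJ z : z * conjc z = (nsq z)%:C%C.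
Proof. case: z => a b; rewrite /nsq /= /conjc; apply/eqP; rewrite eq_complex /=; apply/andP; split; apply/eqP; ring. Qed.

Lemma nsqM z w : nsq (z * w) = nsq z * nsq w.
Proof. case: z => a b; case: w => c d; rewrite /nsq /=. ring. Qed.

Lemma cisD a b : cis a * cis b = cis (a + b).
Proof. rewrite /cis sinD cosD; apply/eqP; rewrite eq_complex /=; apply/andP; split; apply/eqP; ring. Qed.

Lemma cisJ a : conjc (cis a) = cis (- a).
Proof. by rewrite /cis /conjc sinN cosN. Qed.

Lemma nsq_cis a : nsq (cis a) = 1.
Proof. exact: cos2Dsin2. Qed.

Lemma nsq1cis a : nsq (1 - cis a) = 2 - 2 * cos a.
Proof. rewrite /nsq /cis /=. have := cos2Dsin2 a. move=> h. nra. Qed.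


Lemma cis0 : cis 0 = 1.
Proof. by rewrite /cis cos0 sin0. Qed.

Lemma cisX a j : cis a ^+ j = cis (j%:R * a).
Proof.
elim: j => [|j IH]; first by rewrite expr0 mul0r cis0.
by rewrite exprS IH cisD mulrS mulrDl mul1r.
Qed.

Lemma cis2pi : cis (2 * pi) = 1.
Proof. by rewrite /cis mulr_natl cos2pi sin2pi. Qed.

Lemma cis2pin (j : nat) : cis (2 * pi * j%:R) = 1.
Proof. rewrite (mulrC (2 * pi)). rewrite -cisX. rewrite cis2pi expr1n. reflexivity. Qed.

Lemma two_cos2 (y : R) : 2 - 2 * cos (2 * y) = 4 * sin y ^+ 2.
Proof.
have -> : 2 * y = y *+ 2 by rewrite mulr_natl.
rewrite cos_mulr2n cos2sin2; ring.
Qed.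

Lemma sin_ne0 (y : R) : 0 < `|y| -> `|y| < pi -> sin y != 0.
Proof.
move=> h1 h2; case: (lerP 0 y) => hy.
  rewrite ger0_norm // in h1 h2; apply: lt0r_neq0; apply: sin_gt0_pi; lra.
rewrite ltr0_norm // in h1 h2.
rewrite -[y]opprK sinN oppr_eq0; apply: lt0r_neq0; apply: sin_gt0_pi; lra.
Qed.

End S.


Section S.
Variable R : realType.

Let jf (t : R) : R := pi * sin t - 2 * t.

Let jf_der (x : R) : is_derive x (1:R) jf (pi * cos x - 2).
Proof.
rewrite /jf.
apply: is_derive_eq.
by rewrite -[2%:A]/(2 * 1) mulr1.
Qed.

Let jf_cont : continuous jf.
Proof. move=> x; apply: differentiable_continuous; apply/derivable1_diffP.
by apply: ex_derive; apply: jf_der. Qed.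

Lemma cos_anti (a b : R) : 0 <= a -> a <= b -> b <= pi -> cos b <= cos a.
Proof.
move=> a0 ab bp; have [->|aneb] := eqVneq a b; first by [].
have ab' : a < b by rewrite lt_neqAle aneb.
apply: ltW. rewrite ltr_cos // in_itv /=; apply/andP; split => //; lra.
Qed.

Lemma jordan (y : R) : 0 <= y -> y <= pi / 2 -> 2 * y <= pi * sin y.
Proof.
move=> y0 yp.
have pi0 := pi_gt0 R.
have [c1 c1i e1] := @MVT_segment R jf (fun x => pi * cos x - 2) 0 y y0
  (fun x _ => jf_der x) (continuous_subspaceT jf_cont).
have [c2 c2i e2] := @MVT_segment R jf (fun x => pi * cos x - 2) y (pi/2) yp
  (fun x _ => jf_der x) (continuous_subspaceT jf_cont).
move: c1i c2i; rewrite !in_itv /= => /andP[c10 c1y] /andP[c2y c2p].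
have hc : cos c2 <= cos c1 by apply: cos_anti => //; lra.
move: e1 e2; rewrite /jf sin0 sin_pihalf mulr0 subr0 => e1 e2.
have hB : pi * cos c2 - 2 <= pi * cos c1 - 2 by nra.
have [h|h] := leP 0 (pi * cos c1 - 2).
  have := mulr_ge0 h y0; lra.
have h2 : pi * cos c2 - 2 < 0 by lra.
have : 0 <= pi / 2 - y by lra.
move=> h3; have h4 : 0 <= - (pi * cos c2 - 2) by lra.
have := mulr_ge0 h4 h3. rewrite mulNr. lra.
Qed.

End S.


Section S.
Variable R : realType.
Local Notation C := R[i].
Local Notation nsq := (@nsq R).
Local Notation cis := (@cis R).

Lemma chiE k (a x : 'I_k) :
  chi R a x = cis (2 * pi * (val a)%:R * (val x)%:R / k%:R).
Proof. by []. Qed.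

Lemma chi_sym k (a x : 'I_k) : chi R a x = chi R x a.
Proof. by rewrite !chiE (mulrAC (2 * pi)). Qed.

Lemma chi_ortho k (a b : 'I_k) : (0 < k)%N ->
  \sum_(x : 'I_k) chi R a x * conjc (chi R b x) = if a == b then k%:R else 0.
Proof.
move=> k0.
set th : R := 2 * pi * ((val a)%:R - (val b)%:R) / k%:R.
have E x : chi R a x * conjc (chi R b x) = cis th ^+ (val x).
  rewrite !chiE cisJ cisD cisX; congr cis; rewrite /th; field.
  by rewrite pnatr_eq0 -lt0n.
under eq_bigr => x _ do rewrite E.
case: eqVneq => [eab|ab].
  rewrite /th eab subrr mulr0 mul0r cis0.
  under eq_bigr => x _ do rewrite expr1n.
  by rewrite sumr_const card_ord.
have h1 : cis th ^+ k - 1 = 0.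
  rewrite cisX /th.
  have -> : (k%:R:R) * (2 * pi * ((val a)%:R - (val b)%:R) / k%:R)
     = 2 * pi * (val a)%:R + - (2 * pi * (val b)%:R).
    by field; rewrite pnatr_eq0 -lt0n.
  by rewrite -cisD -cisJ !cis2pin conjc1 mulr1 subrr.
have h2 : cis th - 1 != 0.
  apply/eqP => h.
  have : nsq (1 - cis th) = 0 by rewrite -opprB h oppr0 /nsq /= expr0n /= addr0.
  rewrite nsq1cis /th.
  have -> : 2 * (pi : R) * ((val a)%:R - (val b)%:R) / k%:R
     = 2 * (pi * ((val a)%:R - (val b)%:R) / k%:R) by ring.
  rewrite two_cos2 => /eqP; rewrite mulf_eq0 /= pnatr_eq0 /= expf_eq0 /=.
  apply/negP; apply: sin_ne0.
    rewrite normr_gt0 !mulf_neq0 ?invr_eq0 ?pnatr_eq0 -?lt0n //.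
      by rewrite gt_eqF // pi_gt0.
    by rewrite subr_eq0 eqr_nat; apply: contra ab => /eqP h0; apply/eqP/val_inj.
  have hk : (0:R) < k%:R by rewrite ltr0n.
  have hk' : (0:R) < k%:R^-1 by rewrite invr_gt0.
  rewrite normrM (gtr0_norm hk') normrM (gtr0_norm (pi_gt0 R)).
  rewrite ltr_pdivrMr // ltr_pM2l ?pi_gt0 //.
  have ha : ((val a)%:R : R) < k%:R by rewrite ltr_nat ltn_ord.
  have hb : ((val b)%:R : R) < k%:R by rewrite ltr_nat ltn_ord.
  have ha0 : (0:R) <= (val a)%:R by rewrite ler0n.
  have hb0 : (0:R) <= (val b)%:R by rewrite ler0n.
  rewrite ltr_norml; apply/andP; split; lra.
move: h1; rewrite subrX1 => /eqP; rewrite mulf_eq0 (negbTE h2) /=.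
by move/eqP.
Qed.

End S.


Section S.
Variable R : realType.
Local Notation C := R[i].
Local Notation nsq := (@nsq R).
Local Notation cis := (@cis R).

Lemma conjM (z w : C) : conjc (z * w) = conjc z * conjc w.
Proof. exact: rmorphM. Qed.

Lemma conjB (z w : C) : conjc (z - w) = conjc z - conjc w.
Proof. exact: rmorphB. Qed.

Lemma conj_sum (I : finType) (P : pred I) (F : I -> C) :
  conjc (\sum_(i | P i) F i) = \sum_(i | P i) conjc (F i).
Proof. exact: rmorph_sum. Qed.

Lemma realC_sum (I : finType) (P : pred I) (F : I -> R) :
  (\sum_(i | P i) F i)%:C%C = \sum_(i | P i) (F i)%:C%C.
Proof. exact: rmorph_sum. Qed.

Lemma realC_mul (a b : R) : (a * b)%:C%C = a%:C%C * b%:C%C.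
Proof. exact: rmorphM. Qed.

Lemma conj_natV k : conjc ((k%:R : C)^-1) = (k%:R)^-1.
Proof. by rewrite conjc_inv conjc_nat. Qed.

Lemma realC_natV k : ((k%:R : R)^-1)%:C%C = (k%:R : C)^-1.
Proof. by rewrite fmorphV rmorph_nat. Qed.

Lemma norm2sqE k (u : 'I_k -> C) : norm2sq u = (k%:R)^-1 * \sum_x nsq (u x).
Proof.
rewrite /norm2sq /ipZ.
under eq_bigr do rewrite mulJ.
by rewrite -rmorph_sum -realC_natV -rmorphM.
Qed.

Lemma parsevalC k (u : 'I_k -> C) : (0 < k)%N ->
  \sum_b fhat u b * conjc (fhat u b) = (k%:R)^-1 * \sum_x u x * conjc (u x).
Proof.
move=> k0.
have step b : fhat u b * conjc (fhat u b) = (k%:R)^-1 * (k%:R)^-1 *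
   \sum_x \sum_y (u x * conjc (u y)) * (chi R y b * conjc (chi R x b)).
  rewrite /fhat /ipZ conjM conj_natV conj_sum mulrACA mulr_suml.
  congr (_ * _); apply: eq_bigr => x _; rewrite mulr_sumr; apply: eq_bigr => y _.
  rewrite conjM conjcK (chi_sym R _ b x) (chi_sym R _ b y); ring.
under eq_bigr do rewrite step.
rewrite -mulr_sumr exchange_big /=.
under eq_bigr => x _ do rewrite exchange_big /=.
under eq_bigr => x _ do under eq_bigr => y _ do rewrite -mulr_sumr chi_ortho //.
have inner x : \sum_y u x * conjc (u y) * (if y == x then (k%:R : C) else 0)
    = u x * conjc (u x) * k%:R.
  rewrite (bigD1 x) //= eqxx big1 ?addr0 // => y /negbTE ->; by rewrite mulr0.
under eq_bigr => x _ do rewrite inner.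
rewrite -mulrA; congr (_ * _).
rewrite mulr_sumr; apply: eq_bigr => x _.
by field; rewrite pnatr_eq0 -lt0n.
Qed.

Lemma parseval k (u : 'I_k -> C) : (0 < k)%N ->
  \sum_b nsq (fhat u b) = norm2sq u.
Proof.
move=> k0; rewrite norm2sqE.
apply: (@complexI R).
rewrite realC_mul realC_natV !realC_sum.
under eq_bigr do rewrite -mulJ.
rewrite parsevalC //; congr (_ * _); apply: eq_bigr => x _; by rewrite mulJ.
Qed.

End S.


Section S.
Variable R : realType.
Local Notation C := R[i].
Local Notation nsq := (@nsq R).

Lemma fhat_chi k (g b : 'I_k) : (0 < k)%N ->
  fhat (chi R g) b = if g == b then 1 else 0.
Proof.
move=> k0; rewrite /fhat /ipZ chi_ortho //; case: eqP => _; last by rewrite mulr0.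
by rewrite mulVf // pnatr_eq0 -lt0n.
Qed.

Lemma fhat_ext k (u v : 'I_k -> C) b : (forall x, u x = v x) -> fhat u b = fhat v b.
Proof. by move=> h; rewrite /fhat /ipZ; under eq_bigr do rewrite h. Qed.

Lemma fhatD k (u v : 'I_k -> C) b :
  fhat (fun x => u x + v x) b = fhat u b + fhat v b.
Proof. rewrite /fhat /ipZ -mulrDr -big_split; congr (_ * _); apply: eq_bigr => x _; exact: mulrDl. Qed.

Lemma fhatB k (u v : 'I_k -> C) b :
  fhat (fun x => u x - v x) b = fhat u b - fhat v b.
Proof. rewrite /fhat /ipZ -mulrBr -sumrB; congr (_ * _); apply: eq_bigr => x _; exact: mulrBl. Qed.

Lemma fhat_sumZ k (I : finType) (P : pred I) (c : I -> C) (v : I -> 'I_k -> C) b :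
  fhat (fun x => \sum_(i | P i) c i * v i x) b = \sum_(i | P i) c i * fhat (v i) b.
Proof.
rewrite /fhat /ipZ; under eq_bigr do rewrite mulr_suml.
rewrite exchange_big mulr_sumr; apply: eq_bigr => i _.
rewrite mulr_sumr mulr_sumr mulr_sumr; apply: eq_bigr => x _; ring.
Qed.

Lemma nsq0 : nsq 0 = 0.
Proof. by rewrite /nsq /= expr0n /= addr0. Qed.

Lemma tailE k (u : 'I_k -> C) (S : {set 'I_k}) : (0 < k)%N ->
  norm2sq (fun x => u x - restrF u S x) = \sum_(b | b \notin S) nsq (fhat u b).
Proof.
move=> k0; rewrite -parseval // [RHS]big_mkcond /=; apply: eq_bigr => b _.
rewrite fhatB /restrF fhat_sumZ.
under eq_bigr do rewrite fhat_chi //.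
case: (boolP (b \in S)) => hb /=.
  by rewrite (bigD1 b) //= eqxx mulr1 big1 ?addr0 ?subrr ?nsq0 // => g /andP[_ /negbTE ->]; rewrite mulr0.
by rewrite big1 ?subr0 // => g gS; case: eqP => [gb|]; [rewrite -gb gS in hb | rewrite mulr0].
Qed.

End S.


Section S.
Variable R : realType.
Local Notation C := R[i].
Local Notation nsq := (@nsq R).

Lemma ReD (x y : C) : complex.Re (x + y) = complex.Re x + complex.Re y.
Proof. by case: x; case: y. Qed.

Lemma Re_sum (I : finType) (P : pred I) (F : I -> C) :
  complex.Re (\sum_(i | P i) F i) = \sum_(i | P i) complex.Re (F i).
Proof. elim/big_rec2: _ => [|i x y _ h] //; by rewrite ReD h. Qed.

Lemma quad_le (A B X : R) : 0 <= A -> 0 <= B ->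
  (forall t, 0 <= t ^+ 2 * A - 2 * t * X + B) -> X <= Num.sqrt A * Num.sqrt B.
Proof.
move=> A0 B0 h.
case: (lerP X 0) => hX.
  by apply: le_trans hX _; apply: mulr_ge0; apply: sqrtr_ge0.
case: (eqVneq A 0) => hA.
  have := h ((B + 1) / (2 * X)).
  have -> : 2 * ((B + 1) / (2 * X)) * X = B + 1.
    by field; rewrite gt_eqF.
  rewrite hA mulr0; lra.
have Ap : 0 < A by rewrite lt_neqAle eq_sym hA.
have := h (X / A).
have -> : (X / A) ^+ 2 * A - 2 * (X / A) * X + B = B - X ^+ 2 / A.
  by field.
rewrite subr_ge0 ler_pdivrMr // => hX2.
rewrite -sqrtrM // -(ger0_norm (ltW hX)) -sqrtr_sqr.
by rewrite ler_sqrt ?mulr_ge0 // mulrC.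
Qed.

Lemma nsq_lin (t : R) (z w : C) :
  nsq (t%:C%C * z - w) = t ^+ 2 * nsq z - 2 * t * complex.Re (z * conjc w) + nsq w.
Proof. case: z => a b; case: w => c d; rewrite /nsq /=; ring. Qed.

Lemma nsqD (z w : C) :
  nsq (z + w) = nsq z + nsq w + 2 * complex.Re (z * conjc w).
Proof. case: z => a b; case: w => c d; rewrite /nsq /=; ring. Qed.

Lemma CS (I : finType) (P : pred I) (z w : I -> C) :
  \sum_(i | P i) complex.Re (z i * conjc (w i)) <=
  Num.sqrt (\sum_(i | P i) nsq (z i)) * Num.sqrt (\sum_(i | P i) nsq (w i)).
Proof.
apply: quad_le; try by apply: sumr_ge0 => i _; apply: nsq_ge0.
move=> t.
have : 0 <= \sum_(i | P i) nsq (t%:C%C * z i - w i) by apply: sumr_ge0 => i _; apply: nsq_ge0.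
under eq_bigr do rewrite nsq_lin.
rewrite big_split /= sumrB -!mulr_sumr; by [].
Qed.

Lemma minkowski (I : finType) (P : pred I) (z w : I -> C) :
  \sum_(i | P i) nsq (z i + w i) <=
  (Num.sqrt (\sum_(i | P i) nsq (z i)) + Num.sqrt (\sum_(i | P i) nsq (w i))) ^+ 2.
Proof.
under eq_bigr do rewrite nsqD.
rewrite big_split big_split /= -mulr_sumr.
have hA : 0 <= \sum_(i | P i) nsq (z i) by apply: sumr_ge0 => i _; apply: nsq_ge0.
have hB : 0 <= \sum_(i | P i) nsq (w i) by apply: sumr_ge0 => i _; apply: nsq_ge0.
have := CS _ P z w.
rewrite sqrrD !sqr_sqrtr //; lra.
Qed.

Lemma nsqJ (z : C) : nsq (conjc z) = nsq z.
Proof. case: z => a b; rewrite /nsq /=; ring. Qed.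

Lemma CSc (I : finType) (P : pred I) (c z : I -> C) :
  nsq (\sum_(i | P i) c i * z i) <=
  (\sum_(i | P i) nsq (c i)) * (\sum_(i | P i) nsq (z i)).
Proof.
set S := \sum_(i | P i) c i * z i.
have e1 : nsq S = \sum_(i | P i) complex.Re (c i * conjc (conjc (z i) * S)).
  have -> : nsq S = complex.Re (S * conjc S) by rewrite mulJ.
  rewrite {1}/S mulr_suml Re_sum; apply: eq_bigr => i _.
  by rewrite conjM conjcK mulrA.
have e2 : \sum_(i | P i) nsq (conjc (z i) * S) = (\sum_(i | P i) nsq (z i)) * nsq S.
  rewrite mulr_suml; apply: eq_bigr => i _; by rewrite nsqM nsqJ.
have hA : 0 <= \sum_(i | P i) nsq (c i) by apply: sumr_ge0 => i _; apply: nsq_ge0.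
have hB : 0 <= \sum_(i | P i) nsq (z i) by apply: sumr_ge0 => i _; apply: nsq_ge0.
have hS := nsq_ge0 _ S.
have := CS _ P c (fun i => conjc (z i) * S).
rewrite -e1 e2 sqrtrM // => h.
set s := Num.sqrt (nsq S).
set K := Num.sqrt (\sum_(i | P i) nsq (c i)) * Num.sqrt (\sum_(i | P i) nsq (z i)).
have s0 : 0 <= s by apply: sqrtr_ge0.
have K0 : 0 <= K by apply: mulr_ge0; apply: sqrtr_ge0.
have hs : nsq S = s ^+ 2 by rewrite sqr_sqrtr.
have hK : (\sum_(i | P i) nsq (c i)) * (\sum_(i | P i) nsq (z i)) = K ^+ 2.
  by rewrite exprMn !sqr_sqrtr.
rewrite mulrA -/K -/s {1}hs in h. rewrite hs hK.
have : s <= K.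
  case: (eqVneq s 0) => [->//|sn0].
  have sp : 0 < s by rewrite lt_neqAle eq_sym sn0.
  by move: h; rewrite expr2 ler_pM2r.
move=> sK; rewrite ler_sqr // ?nnegrE //.
Qed.

End S.


Section S.
Variable R : realType.

Lemma sum_shift m (F : nat -> R) c : (0 < m)%N ->
  \sum_(b : 'I_m) F ((val b + c) %% m)%N = \sum_(i : 'I_m) F (val i).
Proof.
move=> m0.
pose h : 'I_m -> 'I_m := fun b => Ordinal (ltn_pmod (val b + c) m0).
have hi : injective h.
  move=> b1 b2 /(congr1 val) /= /eqP; rewrite eqn_modDr !modn_small //.
  by move=> /eqP e; apply: val_inj.
by rewrite [RHS](reindex_inj hi).
Qed.

Lemma sum_rev m (F : 'I_m -> R) : \sum_(b : 'I_m) F (rev_ord b) = \sum_b F b.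
Proof. by rewrite [RHS](reindex_inj rev_ord_inj). Qed.

Definition FF (r u : R) (i : nat) : R :=
  if r + 1 < i%:R + u then (4 * (i%:R + u) ^+ 2)^-1 else 0.

Lemma FF_ge0 r u i : 0 <= FF r u i.
Proof. rewrite /FF; case: ifP => // _; by rewrite invr_ge0 mulr_ge0 ?sqr_ge0. Qed.

Lemma tail_sum m (r u : R) : 0 < r -> u <= 1 ->
  \sum_(i : 'I_m) FF r u i <= (4 * r)^-1.
Proof.
move=> r0 u1.
pose g (i : nat) : R := (Num.max r (i%:R + u - 1))^-1.
have gpos i : 0 < Num.max r (i%:R + u - 1) by rewrite lt_max r0.
have hF i : FF r u i <= (g i - g i.+1) / 4.
  rewrite /FF /g; case: ifP => h.
    have e1 : Num.max r (i%:R + u - 1) = i%:R + u - 1 by apply/max_idPr; lra.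
    have e2 : Num.max r (i.+1%:R + u - 1) = i%:R + u.
      rewrite -natr1 (_ : i%:R + 1 + u - 1 = i%:R + u); last by ring.
      by apply/max_idPr; lra.
    rewrite e1 e2.
    set s := i%:R + u.
    have s1 : 1 < s by rewrite /s; lra.
    have -> : (s - 1)^-1 - s^-1 = ((s - 1) * s)^-1.
      by field; apply/andP; split; rewrite gt_eqF //; lra.
    have -> : ((s - 1) * s)^-1 / 4 = (4 * ((s - 1) * s))^-1.
      by field; apply/andP; split; rewrite gt_eqF //; lra.
    rewrite lef_pV2 ?posrE; try nra.
  apply: mulr_ge0; last lra.
  rewrite subr_ge0 lef_pV2 ?posrE ?gpos //.
  rewrite ge_max !le_max lexx /=; apply/orP; right; rewrite -natr1; lra.
have H1 : \sum_(i < m) FF r u i <= \sum_(i < m) (g i - g i.+1) / 4.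
  by apply: ler_sum => i _; exact: hF.
have T : \sum_(0 <= k < m) (g k - g k.+1) = g 0%N - g m.
  rewrite (@telescope_sumr_eq _ 0 m (fun k => - g k)) //; first by rewrite opprK addrC.
  by move=> k _; rewrite opprK addrC.
rewrite -mulr_suml -(big_mkord xpredT (fun i => g i - g i.+1)) T in H1.
apply: le_trans H1 _.
have g0 : g 0%N = r^-1.
  by rewrite /g; congr (_^-1); apply/max_idPl; rewrite add0r; lra.
have gm : 0 <= g m by rewrite /g invr_ge0 ltW.
rewrite g0 invfM.
have : 0 < r^-1 by rewrite invr_gt0.
move=> hr; nra.
Qed.

End S.


Section S.
Variable R : realType.
Local Notation C := R[i].
Local Notation nsq := (@nsq R).
Local Notation cis := (@cis R).

Lemma nsqN (z : C) : nsq (- z) = nsq z.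
Proof. case: z => a b; rewrite /nsq /=; ring. Qed.

Lemma nsq_realC (a : R) : nsq (a%:C%C) = a ^+ 2.
Proof. by rewrite /nsq /= expr0n /= addr0. Qed.

Lemma geom_bound (phi : R) l :
  nsq (1 - cis phi) * nsq (\sum_(i < l) cis phi ^+ i) <= 4.
Proof.
rewrite -nsqM -nsqN -mulNr opprB -subrX1 cisX -nsqN opprB nsq1cis.
have := cos_geN1 (l%:R * phi); lra.
Qed.

Lemma chiJ k (b x : 'I_k) :
  conjc (chi R b x) = cis (- (2 * pi * (val b)%:R * (val x)%:R / k%:R)).
Proof. by rewrite chiE cisJ. Qed.

Lemma fcoefE n m (a : 'I_n) (b : 'I_m) : (0 < m)%N ->
  fhat (@extend R n m (chi R a)) b =
  (m%:R)^-1 * \sum_(i < minn n m) cis (2 * pi * (val a)%:R / n%:R - 2 * pi * (val b)%:R / m%:R) ^+ i.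
Proof.
move=> m0; rewrite /fhat /ipZ; congr (_ * _).
rewrite (big_ord_widen m (fun i => cis (2 * pi * (val a)%:R / n%:R - 2 * pi * (val b)%:R / m%:R) ^+ i)) ?geq_minr //.
rewrite [RHS]big_mkcond; apply: eq_bigr => x _.
rewrite chiJ /extend; case: ifP => hx; last by rewrite mul0r.
have hxn : (val x < n)%N by move: hx; rewrite leq_min => /andP[].
rewrite (insubT (fun k => k < n)%N hxn) chiE cisD cisX /=; congr cis.
by ring.
Qed.

End S.


Section S.
Variable R : realType.
Local Notation C := R[i].
Local Notation nsq := (@nsq R).
Local Notation cis := (@cis R).

Variables (m n : nat) (hm : (0 < m)%N) (hn : (0 < n)%N) (a : 'I_n).

Definition pp := ((m * val a) %/ n)%N.
Definition qq := ((m * val a) %% n)%N.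
Definition dd : R := qq%:R / n%:R.
Definition XX : R := (m%:R / n%:R) * (val a)%:R.
Definition iP (b : 'I_m) := ((val b + (m - pp.+1)) %% m)%N.
Definition iN (b : 'I_m) := ((val (rev_ord b) + pp.+1) %% m)%N.
Definition vP b : R := (iP b)%:R + (1 - dd).
Definition vN b : R := (iN b)%:R + dd.

Lemma XXE : XX = pp%:R + dd.
Proof.
rewrite /XX /dd /pp.
have e := divn_eq (m * val a) n.
have : ((m * val a)%N%:R : R) = ((m * val a) %/ n)%N%:R * n%:R + ((m * val a) %% n)%N%:R.
  by rewrite {1}e natrD natrM.
rewrite natrM => h.
apply: (@mulIf _ n%:R); first by rewrite pnatr_eq0 -lt0n.
rewrite mulrDl mulrAC divfK ?pnatr_eq0 -?lt0n // divfK ?pnatr_eq0 -?lt0n //.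
Qed.

Lemma dd_ge0 : 0 <= dd.
Proof. by rewrite /dd divr_ge0 ?ler0n. Qed.

Lemma dd_lt1 : dd < 1.
Proof.
rewrite /dd ltr_pdivrMr ?ltr0n // mul1r ltr_nat /qq; exact: ltn_pmod.
Qed.

Lemma pp_lt : (pp < m)%N.
Proof.
by rewrite /pp ltn_divLR // ltn_pmul2l // ltn_ord.
Qed.

Lemma iP_le b : (val b <= pp)%N -> (iP b + pp.+1 = val b + m)%N.
Proof.
move=> h; have ev : val b = nat_of_ord b by []; have := pp_lt; rewrite /iP => hp.
rewrite modn_small; lia.
Qed.

Lemma iP_gt b : (pp < val b)%N -> (iP b + pp.+1 = val b)%N.
Proof.
move=> h; have ev : val b = nat_of_ord b by []; have := pp_lt; have : (val b < m)%N := ltn_ord b; rewrite /iP => hb hp.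
have -> : (val b + (m - pp.+1) = (val b - pp.+1) + m)%N by lia.
rewrite modnDr modn_small; lia.
Qed.

Lemma iN_le b : (val b <= pp)%N -> (iN b + val b = pp)%N.
Proof.
move=> h; have ev : val b = nat_of_ord b by []; have := pp_lt; have : (val b < m)%N := ltn_ord b; rewrite /iN /= => hb hp.
have -> : (m - (val b).+1 + pp.+1 = (pp - val b) + m)%N by lia.
rewrite modnDr modn_small; lia.
Qed.

Lemma iN_gt b : (pp < val b)%N -> (iN b + val b = pp + m)%N.
Proof.
move=> h; have ev : val b = nat_of_ord b by []; have := pp_lt; have : (val b < m)%N := ltn_ord b; rewrite /iN /= => hb hp.
rewrite modn_small; lia.
Qed.

Definition ZZ (b : 'I_m) : R := if (val b <= pp)%N then m%:R else 0.

Lemma XbP b : XX - (val b)%:R = ZZ b - vP b.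
Proof.
rewrite XXE /ZZ /vP; case: ifP => h.
  have := congr1 (fun k : nat => (k%:R : R)) (iP_le _ h); rewrite /= !natrD -natr1 => e; lra.
have h' : (pp < val b)%N by rewrite ltnNge h.
have := congr1 (fun k : nat => (k%:R : R)) (iP_gt _ h'); rewrite /= !natrD -natr1 => e; lra.
Qed.

Lemma XbN b : XX - (val b)%:R = vN b - (m%:R - ZZ b).
Proof.
rewrite XXE /ZZ /vN; case: ifP => h.
  have := congr1 (fun k : nat => (k%:R : R)) (iN_le _ h); rewrite /= !natrD => e; lra.
have h' : (pp < val b)%N by rewrite ltnNge h.
have := congr1 (fun k : nat => (k%:R : R)) (iN_gt _ h'); rewrite /= !natrD => e; lra.
Qed.


Lemma vPN b : vP b + vN b = m%:R.
Proof. have := XbP b; have := XbN b; lra. Qed.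

Lemma vP_gt0 b : 0 < vP b.
Proof. rewrite /vP; have := dd_lt1; have : (0:R) <= (iP b)%:R by rewrite ler0n. lra. Qed.

Lemma vN_ge0 b : 0 <= vN b.
Proof. rewrite /vN; have := dd_ge0; have : (0:R) <= (iN b)%:R by rewrite ler0n. lra. Qed.

Lemma phiE (b : 'I_m) : 2 * pi * (val a)%:R / n%:R - 2 * pi * (val b)%:R / m%:R
  = (2 * pi / m%:R) * (XX - (val b)%:R).
Proof.
rewrite /XX; field; apply/andP; split; rewrite pnatr_eq0 -lt0n //.
Qed.

Lemma cos_phiP (b : 'I_m) : cos (2 * pi * (val a)%:R / n%:R - 2 * pi * (val b)%:R / m%:R)
  = cos (2 * pi * vP b / m%:R).
Proof.
have m0 : (m%:R : R) != 0 by rewrite pnatr_eq0 -lt0n.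
rewrite phiE XbP /ZZ; case: ifP => _.
  have -> : 2 * pi / m%:R * (m%:R - vP b) = - (2 * pi * vP b / m%:R) + pi *+ 2.
    by rewrite mulr2n; field.
  by rewrite cosD2pi cosN.
have -> : 2 * pi / m%:R * (0 - vP b) = - (2 * pi * vP b / m%:R) by field.
by rewrite cosN.
Qed.

Lemma cos_phiN (b : 'I_m) : cos (2 * pi * (val a)%:R / n%:R - 2 * pi * (val b)%:R / m%:R)
  = cos (2 * pi * vN b / m%:R).
Proof.
have m0 : (m%:R : R) != 0 by rewrite pnatr_eq0 -lt0n.
rewrite phiE XbN /ZZ; case: ifP => _.
  by congr cos; field.
have -> : 2 * pi / m%:R * (vN b - (m%:R - 0)) = (2 * pi * vN b / m%:R) - pi *+ 2.
  by rewrite mulr2n; field.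
by rewrite -[in RHS](subrK (pi *+ 2) (2 * pi * vN b / m%:R)) cosD2pi.
Qed.

Lemma distmod_le (k : nat) (y : R) (z : int) : distmod k y <= `|y - k%:R * z%:~R|.
Proof.
rewrite /distmod; apply: ge_inf; last by exists z.
by exists 0 => w [z' _ <-]; exact: normr_ge0.
Qed.

Lemma dist_vP b : distmod m (XX - (val b)%:R) <= vP b.
Proof.
rewrite XbP /ZZ; case: ifP => _.
  have := distmod_le m (m%:R - vP b) 1.
  by rewrite mulr1 addrAC subrr sub0r normrN gtr0_norm ?vP_gt0.
have := distmod_le m (0 - vP b) 0.
by rewrite mulr0 subr0 sub0r normrN gtr0_norm ?vP_gt0.
Qed.

Lemma dist_vN b : distmod m (XX - (val b)%:R) <= vN b.
Proof.
rewrite XbN /ZZ; case: ifP => _.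
  have := distmod_le m (vN b - (m%:R - m%:R)) 0.
  by rewrite mulr0 subr0 subrr subr0 ger0_norm ?vN_ge0.
have := distmod_le m (vN b - (m%:R - 0)) (-1).
rewrite subr0 intrN mulrN mulr1 opprK subrK ger0_norm ?vN_ge0 //.
Qed.

Lemma coef_le (b : 'I_m) : 0 < Num.min (vP b) (vN b) ->
  nsq (fhat (@extend R n m (chi R a)) b) <= (4 * (Num.min (vP b) (vN b)) ^+ 2)^-1.
Proof.
set d := Num.min (vP b) (vN b) => d0.
rewrite (fcoefE _ _ _ a b hm).
set phi := 2 * pi * (val a)%:R / n%:R - 2 * pi * (val b)%:R / m%:R.
set S := \sum_(i < minn n m) cis phi ^+ i.
have G := geom_bound _ phi (minn n m); rewrite -/S nsq1cis in G.
have hcos : cos phi = cos (2 * pi * d / m%:R).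
  rewrite /d; case: (leP (vP b) (vN b)) => h.
    by rewrite cos_phiP.
  by rewrite cos_phiN.
have M0 : (0:R) < m%:R by rewrite ltr0n.
have hd2 : 2 * d <= m%:R.
  have h1 : d <= vP b by rewrite /d ge_min lexx.
  have h2 : d <= vN b by rewrite /d ge_min lexx orbT.
  have := vPN b; lra.
set y := pi * d / m%:R.
have y0 : 0 <= y by rewrite /y mulr_ge0 ?invr_ge0 ?ler0n // mulr_ge0 ?pi_ge0 // ltW.
have yp : y <= pi / 2.
  rewrite /y ler_pdivrMr // mulrAC ler_pdivlMr // -mulrA ler_pM2l ?pi_gt0 //.
  lra.
have J := jordan _ _ y0 yp.
have hs : 2 * d / m%:R <= sin y.
  rewrite /y in J *.
  have : 2 * (pi * d / m%:R) = pi * (2 * d / m%:R) by field; rewrite gt_eqF.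
  move=> e; rewrite e ler_pM2l ?pi_gt0 // in J.
have hK : 16 * (d / m%:R) ^+ 2 <= 2 - 2 * cos phi.
  rewrite hcos (_ : 2 * pi * d / m%:R = 2 * y); last by rewrite /y; ring.
  rewrite two_cos2.
  have : 0 <= 2 * d / m%:R by rewrite mulr_ge0 ?invr_ge0 ?ler0n // mulr_ge0 // ltW.
  move=> h0.
  have := ler_pXn2r (n := 2) _ _ _.
  nra.
rewrite nsqM -realC_natV nsq_realC.
set A := nsq S.
have A0 : 0 <= A by apply: nsq_ge0.
set t := d / m%:R.
have t0 : 0 < t by rewrite /t divr_gt0.
have key : 4 * t ^+ 2 * A <= 1.
  have G2 : (2 - 2 * cos phi) * A <= 4 := G.
  have := ler_wpM2r A0 hK; rewrite -/t; lra.
have -> : (m%:R^-1) ^+ 2 * A = (4 * t ^+ 2 * A) / (4 * d ^+ 2).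
  rewrite /t; field; apply/andP; split; rewrite gt_eqF //.
rewrite ler_pdivrMr ?mulr_gt0 ?exprn_gt0 //.
rewrite mulVf ?mulf_neq0 ?expf_neq0 ?gt_eqF //.
Qed.

Lemma far_bound (b : 'I_m) (r : R) : 0 < r -> r + 1 < vP b -> r + 1 < vN b ->
  nsq (fhat (@extend R n m (chi R a)) b) <= FF R r (1 - dd) (iP b) + FF R r dd (iN b).
Proof.
move=> r0 hP hN.
have d0 : 0 < Num.min (vP b) (vN b) by rewrite lt_min; apply/andP; split; lra.
apply: (le_trans (coef_le _ d0)).
case: (leP (vP b) (vN b)) => h.
  rewrite /FF -/(vP b) ifT //.
  by rewrite lerDl; case: ifP => // _; rewrite invr_ge0 mulr_ge0 ?sqr_ge0.
rewrite /FF -/(vN b) [X in _ <= _ + X]ifT //.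
by rewrite lerDr; case: ifP => // _; rewrite invr_ge0 mulr_ge0 ?sqr_ge0.
Qed.

Lemma tail_alpha (G : {set 'I_n}) (r : R) : a \in G -> 0 < r ->
  \sum_(b | b \notin Gamma' m G r) nsq (fhat (@extend R n m (chi R a)) b) <= (2 * r)^-1.
Proof.
move=> aG r0.
have H b : b \notin Gamma' m G r -> r + 1 < vP b /\ r + 1 < vN b.
  rewrite /Gamma' inE => /existsPn /(_ a); rewrite aG /= -ltNge => h.
  have h' : r + 1 < distmod m (XX - (val b)%:R) := h.
  split; [exact: lt_le_trans h' (dist_vP b) | exact: lt_le_trans h' (dist_vN b)].
apply: (@le_trans _ _ (\sum_b (FF R r (1 - dd) (iP b) + FF R r dd (iN b)))).
  rewrite big_mkcond /=; apply: ler_sum => b _; case: ifP => hb.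
    by have [h1 h2] := H b hb; apply: far_bound.
  by apply: addr_ge0; apply: FF_ge0.
rewrite big_split /= /iP /iN.
rewrite (sum_shift _ m (FF R r (1 - dd)) (m - pp.+1) hm).
rewrite (sum_rev _ m (fun b => FF R r dd ((val b + pp.+1) %% m))).
rewrite (sum_shift _ m (FF R r dd) pp.+1 hm).
have h1 := tail_sum R m r (1 - dd) r0 (ltac:(have := dd_ge0; lra)).
have h2 := tail_sum R m r dd r0 (ltac:(have := dd_lt1; lra)).
have -> : (2 * r)^-1 = (4 * r)^-1 + (4 * r)^-1 by field; rewrite gt_eqF.
exact: lerD.
Qed.

End S.



Theorem proposition4p3 (R : realType) (m n : nat) (hn : (0 < n)%N) (hm : (0 < m)%N)
  (f : 'I_n -> R[i]) (G : {set 'I_n}) (eps : R) (heps : 0 < eps)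
  (hG : norm2sq (fun x => f x - restrF f G x) <= eps)
  (eps' : R) (heps' : 0 < eps') :
  let g : 'I_m -> R[i] := @extend R n m f in
  let r : R := (#|G|%:R * norm2sq f) / (2 * eps') in
  let G' : {set 'I_m} := @Gamma' R n m G r in
  let t : R := n%:R / m%:R in
  norm2sq (fun x => g x - restrF g G' x)
    <= t * eps + eps' + 2 * Num.sqrt (t * eps * eps').
Proof.
pose g : 'I_m -> R[i] := @extend R n m f.
pose r : R := (#|G|%:R * norm2sq f) / (2 * eps').
pose G' : {set 'I_m} := @Gamma' R n m G r.
pose t : R := n%:R / m%:R.
change (norm2sq (fun x => g x - restrF g G' x)
    <= t * eps + eps' + 2 * Num.sqrt (t * eps * eps')).
pose h := restrF f G.
pose e := fun x => f x - h x.
pose ga := @extend R n m h.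
pose gb := @extend R n m e.
have gE x : g x = ga x + gb x.
  rewrite /g /ga /gb /extend; case: ifP => _; last by rewrite addr0.
  case: insub => [y|] /=; last by rewrite addr0.
  by rewrite /e addrC subrK.
have ghat b : fhat g b = fhat ga b + fhat gb b by rewrite -fhatD; apply: fhat_ext.
rewrite (tailE _ _ g G' hm).
under eq_bigr do rewrite ghat.
set A := \sum_(b | b \notin G') nsq R (fhat ga b).
set B := \sum_(b | b \notin G') nsq R (fhat gb b).
have A0 : 0 <= A by apply: sumr_ge0 => b _; apply: nsq_ge0.
have B0 : 0 <= B by apply: sumr_ge0 => b _; apply: nsq_ge0.
have t0 : 0 <= t by rewrite /t divr_ge0 ?ler0n.
have hB : B <= t * eps.
  have B1 : B <= norm2sq gb.
    rewrite -(parseval _ _ gb hm) /B [X in _ <= X](bigID (fun b => b \notin G')) /= lerDl.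
    by apply: sumr_ge0 => b _; apply: nsq_ge0.
  pose E (i : nat) : R := if (insub i : option 'I_n) is Some y then nsq R (e y) else 0.
  have E0 i : 0 <= E i by rewrite /E; case: insub => [y|] //; apply: nsq_ge0.
  have e1 : \sum_(x : 'I_m) nsq R (gb x) = \sum_(i < minn n m) E i.
    rewrite (big_ord_widen m E (geq_minr n m)) [RHS]big_mkcond; apply: eq_bigr => x _.
    rewrite /gb /extend /E; case: ifP => _; last by rewrite nsq0.
    by case: insub => [y|] //; rewrite nsq0.
  have e2 : \sum_(y : 'I_n) nsq R (e y) = \sum_(i < n) E i.
    by apply: eq_bigr => y _; rewrite /E -[nat_of_ord y]/(val y) valK.
  have e3 : \sum_(i < minn n m) E i <= \sum_(i < n) E i.
    rewrite (big_ord_widen n E (geq_minl n m)).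
    rewrite [X in _ <= X](bigID (fun i : 'I_n => (i < minn n m)%N)) /= lerDl.
    by apply: sumr_ge0 => i _.
  have B2 : norm2sq gb <= t * norm2sq e.
    rewrite !norm2sqE /t e1 e2.
    have -> : n%:R / m%:R * ((n%:R)^-1 * \sum_(i < n) E i) = (m%:R)^-1 * \sum_(i < n) E i.
      by field; apply/andP; split; rewrite pnatr_eq0 -lt0n.
    by apply: ler_wpM2l => //; rewrite invr_ge0 ler0n.
  have hG' : norm2sq e <= eps := hG.
  apply: le_trans B1 _; apply: le_trans B2 _.
  exact: ler_wpM2l.
have hA : A <= eps'.
  pose w (a : 'I_n) := @extend R n m (chi R a).
  have gaE x : ga x = \sum_(a in G) fhat f a * w a x.
    rewrite /ga /w /extend; case: ifP => _; last by rewrite big1 // => a _; rewrite mulr0.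
    case: insub => [y|]; last by rewrite big1 // => a _; rewrite mulr0.
    by rewrite /h /restrF.
  have ahat b : fhat ga b = \sum_(a in G) fhat f a * fhat (w a) b.
    by rewrite -fhat_sumZ; apply: fhat_ext.
  set F := \sum_(a in G) nsq R (fhat f a).
  have F0 : 0 <= F by apply: sumr_ge0 => a _; apply: nsq_ge0.
  have FN : F <= norm2sq f.
    rewrite -(parseval _ _ f hn) /F [X in _ <= X](bigID (fun a => a \in G)) /= lerDl.
    by apply: sumr_ge0 => a _; apply: nsq_ge0.
  set T := \sum_(a in G) \sum_(b | b \notin G') nsq R (fhat (w a) b).
  have A1 : A <= F * T.
    rewrite /A /T exchange_big mulr_sumr; apply: ler_sum => b _.
    rewrite ahat; exact: CSc.
  have N0 : 0 <= norm2sq f by rewrite -(parseval _ _ f hn); apply: sumr_ge0 => a _; apply: nsq_ge0.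
  have T0 : 0 <= T by apply: sumr_ge0 => a _; apply: sumr_ge0 => b _; apply: nsq_ge0.
  apply: le_trans A1 _.
  case: (ltrP 0 r) => r0.
    have T1 : T <= #|G|%:R * (2 * r)^-1.
      apply: le_trans (ler_sum _ (fun a aG => tail_alpha R m n hm hn a G r aG r0)) _.
      by rewrite sumr_const (mulr_natl ((2 * r)^-1) #|G|).
    have hGN : #|G|%:R * norm2sq f != 0.
      apply: contraTneq r0 => e0; by rewrite /r e0 mul0r ltxx.
    apply: le_trans (ler_pM F0 T0 FN T1) _.
    move: hGN; rewrite mulf_eq0 negb_or => /andP[g0 n0].
    have -> : norm2sq f * (#|G|%:R / (2 * r)) = eps'.
      by rewrite /r; field; rewrite g0 n0 (gt_eqF heps').
    by [].
  have rr : 0 <= r by rewrite /r divr_ge0 ?mulr_ge0 ?ler0n //; lra.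
  have r00 : r = 0 by apply/le_anti/andP.
  have : #|G|%:R * norm2sq f = 0.
    move: r00; rewrite /r => /eqP; rewrite mulf_eq0 invr_eq0 => /orP[/eqP //|].
    by rewrite gt_eqF //; lra.
  move/eqP; rewrite mulf_eq0 => /orP[|/eqP n0].
    rewrite pnatr_eq0 => /eqP /cards0_eq G0.
    by rewrite /T G0 big_set0 mulr0 ltW.
  have -> : F = 0 by apply/le_anti/andP; split; [rewrite -n0|].
  by rewrite mul0r ltW.
apply: le_trans (minkowski _ _ _ _ _) _.
rewrite -/A -/B.
have sa : Num.sqrt A <= Num.sqrt eps' by rewrite ler_sqrt // ltW.
have sb : Num.sqrt B <= Num.sqrt (t * eps) by rewrite ler_sqrt // mulr_ge0 // ltW.
rewrite sqrtrM; last exact: mulr_ge0 t0 (ltW heps).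
have := sqrtr_ge0 A; have := sqrtr_ge0 B.
have := sqr_sqrtr (ltW heps'); have := sqr_sqrtr (mulr_ge0 t0 (ltW heps)).
set x := Num.sqrt eps'; set y := Num.sqrt (t * eps).
move=> ex ey a0 b0.
rewrite -/x -/y in sa sb.
set a := Num.sqrt A in sa a0 b0 *; set b := Num.sqrt B in sb a0 b0 *.
have hs : 0 <= a + b <= x + y by apply/andP; split; lra.
have : (a + b) ^+ 2 <= (x + y) ^+ 2.
  case/andP: hs => h1 h2; rewrite ler_sqr ?nnegrE //; lra.
have e2 : (x + y) ^+ 2 = x ^+ 2 + y ^+ 2 + 2 * (y * x) by ring.
lra.
Qed.
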